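(* Let $d\ge2$, $l\in\{1,\dots,d\}$, $c\in\mathbb R$, and let $H=\{h\in\mathbb R^d:h\cdot e_l=c\}$. Let $x,y\in\mathbb Z^d$ satisfy $x\cdot e_l\ge c$ and $y\cdot e_l>c$. Let $V=\{e_i+e_j,\ e_i-e_j,\ -e_i+e_j,\ -e_i-e_j:\ i,j=1,\dots,d\}$. Fix an integer $m\ge1000$ and suppose $|x-y|_1\le m$. Then there exist $y^*\in\mathbb Z^d$ with $y^*\cdot e_l>c$ and $|y-y^*|_\infty\le1$, an integer $K\le 1609+104^{d-1}$, vectors $v_1,\dots,v_K\in V$ and integers $a_1,\dots,a_K$ such that for each $k\le K$, $$\tfrac{m}{1000}\le|a_k|\le\tfrac{m}{10},\qquad \Big|x+\sum_{i=1}^k a_iv_i-y\Big|_\infty\le2m,\qquad \Big(x+\sum_{i=1}^k a_iv_i\Big)\cdot e_l>c,$$ and $y^*-x=\sum_{i=1}^K a_iv_i$.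
   Context: $e_1,\dots,e_d$ are the standard basis vectors of $\mathbb R^d$. *)

(* Defs.v *)
From HB Require Import structures.
From mathcomp Require Import all_boot all_order all_algebra.
From mathcomp Require Import reals.
Set Implicit Arguments. Unset Strict Implicit. Unset Printing Implicit Defensive.
Import Order.TTheory GRing.Theory Num.Theory.
Local Open Scope ring_scope.

Definition e_ (d : nat) (i : 'I_d) : 'rV[int]_d := delta_mx 0 i.

Definition inV (d : nat) (v : 'rV[int]_d) : Prop :=
  exists i j : 'I_d,
    v = e_ i + e_ j \/ v = e_ i - e_ j \/ v = - e_ i + e_ j \/ v = - e_ i - e_ j.

Definition l1norm (d : nat) (v : 'rV[int]_d) : nat := (\sum_(k < d) `|v ord0 k|%N)%N.
Definition linfnorm (d : nat) (v : 'rV[int]_d) : nat := (\max_(k < d) `|v ord0 k|%N)%N.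

Definition coord_R (R : realType) (d : nat) (v : 'rV[int]_d) (l : 'I_d) : R :=
  (v ord0 l)%:~R.

(* Main.v *)
Require Import Defs.
From HB Require Import structures.
From mathcomp Require Import all_boot all_order all_algebra reals.
From mathcomp Require Import zify.
Import Order.TTheory GRing.Theory Num.Theory.
Local Open Scope ring_scope.
Set Implicit Arguments. Unset Strict Implicit. Unset Printing Implicit Defensive.
Definition U (Q : int) (s : nat) : int := s%:Z * (Q %/ 10)%Z + Num.min s%:Z (Q %% 10)%Z.
Lemma U0 Q : U Q 0 = 0.
Proof. rewrite /U. lia. Qed.
Lemma U10 Q : U Q 10 = Q.
Proof. rewrite /U. lia. Qed.
Lemma Ubnd Q s : 0 <= Q -> (s <= 10)%N -> 0 <= U Q s <= Q.
Proof. rewrite /U => h1 h2.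
have hq : 0 <= (Q %/ 10)%Z by lia.
have : s%:Z * (Q %/ 10)%Z <= 10 * (Q %/ 10)%Z by apply: ler_wpM2r => //; lia.
have : 0 <= s%:Z * (Q %/ 10)%Z by apply: mulr_ge0.
lia. Qed.
Lemma Ustep Q s a b : 10 * a <= Q <= 10 * b -> (s < 10)%N ->
  a <= U Q s.+1 - U Q s <= b.
Proof. rewrite /U => h1 h2. lia. Qed.
Lemma Upos Q s a : 10 * a <= Q -> 1 <= a -> (1 <= s <= 10)%N -> 1 <= U Q s.
Proof. rewrite /U => h1 h2 h3.
have hq : a <= (Q %/ 10)%Z by lia.
have : 1 * (Q %/ 10)%Z <= s%:Z * (Q %/ 10)%Z by apply: ler_wpM2r; lia.
lia. Qed.
Definition Pk (A t : int) : int := Num.max t 0 + 10 * A.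
Definition S (A t : int) (s : nat) : int :=
  if (s <= 10)%N then U (Pk A t) s else Pk A t - U (Pk A t - t) (s - 10).
Lemma S0 A t : S A t 0 = 0.
Proof. by rewrite /S /= U0. Qed.
Lemma S20 A t : S A t 20 = t.
Proof. rewrite /S /= U10; lia. Qed.
Lemma PkE A t : Pk A t = Num.max t 0 + 10 * A. Proof. by []. Qed.
Lemma Sbnd A t s : 0 <= A -> (s <= 20)%N -> Num.min 0 t <= S A t s <= Pk A t.
Proof.
move=> hA hs; rewrite /S; case: ifP => h; try move/negbT: h => h.
  have := PkE A t; have := @Ubnd (Pk A t) s.
  set u := U (Pk A t) s; set P := Pk A t; move=> H HP; have := H ltac:(lia) h. lia.
have := PkE A t; have := @Ubnd (Pk A t - t) (s - 10).
set u := U (Pk A t - t) (s - 10); set P := Pk A t; move=> H HP; have := H ltac:(lia) ltac:(lia). lia.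
Qed.
Lemma Spos A t s : 1 <= A -> (1 <= s <= 20)%N -> 1 <= S A t s \/ t <= S A t s.
Proof.
move=> hA hs; rewrite /S; case: ifP => h; try move/negbT: h => h.
  left; apply: (@Upos _ _ A); rewrite ?PkE; lia.
have := PkE A t; have := @Ubnd (Pk A t - t) (s - 10).
set u := U (Pk A t - t) (s - 10); set P := Pk A t; move=> H HP; have := H ltac:(lia) ltac:(lia). lia.
Qed.
Lemma Sstep A B t s : 1 <= A -> t <= 10 * (B - A) -> - t <= 10 * (B - A) -> (s < 20)%N ->
  A <= `|S A t s.+1 - S A t s| <= B.
Proof.
move=> hA h1 h2 hs; rewrite /S; have HP := PkE A t.
case: (ltnP s 10) => h /=.
  rewrite (ltnW h) /=.
  have := @Ustep (Pk A t) s A B; set P := Pk A t in HP *.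
  move=> H; have := H ltac:(lia) h. lia.
case: (ltnP 10 s) => h' /=.
  have := @Ustep (Pk A t - t) (s - 10) A B; rewrite subSn //; set P := Pk A t in HP *.
  move=> H; have := H ltac:(lia) ltac:(lia). set u := U _ _. set u' := U _ _. lia.
have -> : s = 10%N by apply/eqP; rewrite eqn_leq h' h.
rewrite /= U10 (_ : (11 - 10 = 1)%N) //.
have := @Ustep (Pk A t - t) 0 A B; rewrite U0; set P := Pk A t in HP *.
move=> H; have := H ltac:(lia) ltac:(lia). set u := U _ _. lia.
Qed.

Section Aux.
Variables (d : nat) (l : 'I_d).

Definition slot (j : 'I_d) : nat :=
  if (nat_of_ord j == nat_of_ord l) then 0%N else if (j < l)%N then j.+1 else j.
Definition cj (i : nat) : 'I_d :=
  insubd l (if i == 0%N then nat_of_ord l else if (i <= l)%N then i.-1 else i).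

Lemma slot_lt j : (slot j < d)%N.
Proof.
have := ltn_ord j; have := ltn_ord l; rewrite /slot.
case: eqP => _ /=; first lia. case: (ltnP j l) => h /=; lia.
Qed.

Lemma slot_l : slot l = 0%N.
Proof. by rewrite /slot eqxx. Qed.

Lemma slot_inj j j' : slot j = slot j' -> j = j'.
Proof.
move=> h; apply: val_inj; move: h; rewrite /slot /=.
case: eqP => h1 /=; case: eqP => h2 /=; case: (ltnP j l) => h3 /=; case: (ltnP j' l) => h4 /=; lia.
Qed.

Lemma slot_cj i : (i < d)%N -> slot (cj i) = i.
Proof.
move=> hi.
have E : val (cj i) = (if i == 0%N then nat_of_ord l else if (i <= l)%N then i.-1 else i).
  rewrite /cj val_insubd; case: ifP => // /negbT; have := ltn_ord l.
  case: eqP => h0 /=; first lia. case: (leqP i l) => h /=; lia.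
rewrite /slot; have hl := ltn_ord l; move: E => /= E; rewrite E.
case: (i =P 0%N) => h1 /=; first by rewrite eqxx h1.
case: (leqP i l) => h2 /=; case: eqP => h3 /=; try case: ltnP => h4 /=; lia.
Qed.
End Aux.

Lemma clampE (k i r s : nat) : k = (20 * i + r).+1 -> (r < 20)%N ->
  (s != i -> minn (k - 20 * s) 20 = minn (k.-1 - 20 * s) 20) /\
  (s = i -> minn (k - 20 * s) 20 = r.+1 /\ minn (k.-1 - 20 * s) 20 = r).
Proof.
move=> hk hr; split.
  move/eqP=> h; lia.
move=> ->; lia.
Qed.

Section Path.
Variables (d : nat) (l : 'I_d) (x y : 'rV[int]_d) (A : int).

Definition tt (j : 'I_d) : int := ((y ord0 j - x ord0 j + 1) %/ 2)%Z.
Definition pos (k : nat) : 'rV[int]_d :=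
  \row_j (x ord0 j + 2 * S A (tt j) (minn (k - 20 * slot l j) 20)).
Definition av (k : nat) : int :=
  S A (tt (cj l (k.-1 %/ 20))) (k.-1 %% 20).+1 - S A (tt (cj l (k.-1 %/ 20))) (k.-1 %% 20).
Definition vv (k : nat) : 'rV[int]_d := e_ (cj l (k.-1 %/ 20)) + e_ (cj l (k.-1 %/ 20)).

Lemma step k : (1 <= k <= 20 * d)%N -> av k *: vv k = pos k - pos k.-1.
Proof.
move=> hk.
set i := (k.-1 %/ 20)%N; set r := (k.-1 %% 20)%N.
have hr : (r < 20)%N by rewrite ltn_mod.
have hki : k = (20 * i + r).+1 by rewrite /i /r mulnC -divn_eq; lia.
have hi : (i < d)%N by lia.
have C s := clampE s hki hr.
rewrite /av /vv -/i -/r.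
set c := cj l i.
have hsc : slot l c = i by rewrite slot_cj.
apply/rowP => j; rewrite !mxE.
case: (eqVneq j c) => [->|hjc].
  have [-> ->] := (C _).2 hsc. rewrite eqxx /=.
  set s1 := S _ _ _; set s2 := S _ _ _. lia.
have hs : slot l j != i.
  by apply/eqP => h; move/eqP: hjc; apply; apply: (@slot_inj _ l); rewrite h hsc.
rewrite ((C _).1 hs) andbF /=. set s := S _ _ _. lia.
Qed.

Lemma pos0 : pos 0 = x.
Proof. by apply/rowP => j; rewrite !mxE sub0n min0n S0 mulr0 addr0. Qed.

Lemma tele k : (k <= 20 * d)%N -> x + \sum_(1 <= i < k.+1) av i *: vv i = pos k.
Proof.
elim: k => [|k IH] hk.
  by rewrite big_geq // addr0 pos0.
rewrite big_nat_recr //= addrA IH; last lia.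
rewrite step; last lia.
by rewrite /= addrC subrK.
Qed.
End Path.

Lemma Kbnd d : (2 <= d)%N -> (20 * d <= 1609 + 104 ^ (d - 1))%N.
Proof.
case: d => [|[|d]] // _.
have h := ltn_expl d (isT : (1 < 104)%N).
rewrite subn1 /= expnS.
move: (104 ^ d)%N h => X h. lia.
Qed.

Lemma absz_le_int (n : nat) (m : int) : 0 <= m -> (n <= `|m|%N)%N -> n%:Z <= m.
Proof. move=> *. lia. Qed.

Theorem lemmaA5 (R : realType) (d : nat) (hd : (2 <= d)%N) (l : 'I_d) (c : R)
  (x y : 'rV[int]_d)
  (hx : c <= coord_R R x l) (hy : c < coord_R R y l)
  (m : int) (hm : 1000 <= m) (hxy : (l1norm (x - y))%:Z <= m) :
  exists (ystar : 'rV[int]_d),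
    c < coord_R R ystar l /\ (linfnorm (y - ystar) <= 1)%N /\
    exists (K : nat) (v : nat -> 'rV[int]_d) (a : nat -> int),
      (K <= 1609 + 104 ^ (d - 1))%N /\
      (forall k : nat, (1 <= k <= K)%N -> inV (v k)) /\
      (forall k : nat, (1 <= k <= K)%N ->
         (m%:~R / 1000 : R) <= (`|a k|)%:~R /\ (`|a k|)%:~R <= (m%:~R / 10 : R) /\
         (linfnorm (x + \sum_(1 <= i < k.+1) a i *: v i - y))%:Z <= 2 * m /\
         c < coord_R R (x + \sum_(1 <= i < k.+1) a i *: v i) l) /\
      ystar - x = \sum_(1 <= i < K.+1) a i *: v i.
Proof.
set A := (m %/ 100)%Z; set B := (m %/ 10)%Z.
have hA : 1 <= A by rewrite /A; lia.
have Dbnd j : `|y ord0 j - x ord0 j| <= m.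
  have : (`|((x - y)%R) ord0 j|%N <= l1norm (x - y)%R)%N.
    by rewrite /l1norm (bigD1 j) //= leq_addr.
  rewrite !mxE. move: hxy. move: (x ord0 j) (y ord0 j) (l1norm _) => a b L. lia.
have tb j : tt x y j <= 10 * (B - A) /\ - tt x y j <= 10 * (B - A).
  have := Dbnd j; rewrite /tt /A /B. lia.
have posE k j : pos l x y A k ord0 j = x ord0 j + 2 * S A (tt x y j) (minn (k - 20 * slot l j) 20).
  by rewrite mxE.
set K := (20 * d)%N.
have hK : (K <= 20 * d)%N by [].
have clK j : minn (K - 20 * slot l j) 20 = 20%N.
  have := slot_lt l j; rewrite /K; lia.
have ysE j : pos l x y A K ord0 j = x ord0 j + 2 * tt x y j.
  by rewrite posE clK S20.
have i1000 : (1000 : R) = (1000 : int)%:~R by [].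
have i10 : (10 : R) = (10 : int)%:~R by [].
exists (pos l x y A K); split.
  rewrite /coord_R ysE; apply: (lt_le_trans hy); rewrite ler_int /tt; lia.
split.
  apply/bigmax_leqP => j _; rewrite !mxE clK S20 /tt.
  move: (Dbnd j). move: (x ord0 j) (y ord0 j) => a b. lia.
exists K, (vv l), (av l x y A); split; first exact: Kbnd.
split.
  move=> k hk; rewrite /vv; set i := cj _ _; exists i, i; by left.
split; last first.
  by rewrite -(tele l x y A hK) (addrC x) addrK.
move=> k hk; rewrite tele; last by move: hk; rewrite /K; lia.
have ha : A <= `|av l x y A k| <= B.
  rewrite /av; apply: Sstep => //; try exact: (tb _).1; try exact: (tb _).2.
  by rewrite ltn_mod.
split.
  rewrite ler_pdivrMr ?ltr0n // i1000 -intrM ler_int. move: ha hm; rewrite /A. move: (`|av l x y A k|) => z. clear. lia.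
split.
  rewrite ler_pdivlMr ?ltr0n // i10 -intrM ler_int. move: ha hm; rewrite /B. move: (`|av l x y A k|) => z. clear. lia.
split.
  apply: absz_le_int; first lia.
  apply/bigmax_leqP => j _; rewrite !mxE.
  have := Sbnd (tt x y j) (A := A) (s := minn (k - 20 * slot l j) 20) ltac:(lia) ltac:(lia).
  have := Dbnd j; have := tb j; rewrite /Pk /tt /A.
  move: (S _ _ _) => s. move: (x ord0 j) (y ord0 j) => a b. clear. lia.
rewrite /coord_R posE slot_l muln0 subn0.
have := Spos (tt x y l) (A := A) (s := minn k 20) hA ltac:(lia).
set s := S _ _ _. case=> hs.
  apply: (le_lt_trans hx); rewrite ltr_int; lia.
apply: (lt_le_trans hy); rewrite ler_int; move: hs; rewrite /tt. lia.
Qed.
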